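(* Assume $\mathrm{Unif}(\mathcal S)$ and $\mathfrak d=\mathfrak c$. Then there exists a strong measure zero set $X\subseteq\mathbb R$ with $|X|=\mathfrak c$.
   Context: $\mathfrak c=2^{\aleph_0}$. A set $X\subseteq\mathbb R$ has strong measure zero if for every sequence $\langle\varepsilon_i:i<\omega\rangle$ of positive reals there is a sequence $\langle x_i:i<\omega\rangle$ of reals with $X\subseteq\bigcup_{i<\omega}(x_i-\varepsilon_i,x_i+\varepsilon_i)$. $\mathcal S$ denotes the ideal of strong measure zero sets. $\mathrm{Unif}(\mathcal S)$ is the statement ''every set of reals of cardinality less than $\mathfrak c$ has strong measure zero''. $\mathfrak d$ is the least cardinality of a family $\mathcal H\subseteq\omega^\omega$ such that for every $g\in\omega^\omega$ there is $h\in\mathcal H$ with $g(n)<h(n)$ for all $n$. *)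

(* Defs.v *)
From Stdlib Require Import Reals.
Open Scope R_scope.

Definition card_le {S T : Type} (A : S -> Prop) (B : T -> Prop) : Prop :=
  exists f : S -> T, (forall x, A x -> B (f x)) /\
    (forall x y, A x -> A y -> f x = f y -> x = y).

Definition card_eq {S T : Type} (A : S -> Prop) (B : T -> Prop) : Prop :=
  exists f : S -> T, (forall x, A x -> B (f x)) /\
    (forall x y, A x -> A y -> f x = f y -> x = y) /\
    (forall y, B y -> exists x, A x /\ f x = y).

Definition card_lt {S T : Type} (A : S -> Prop) (B : T -> Prop) : Prop :=
  card_le A B /\ ~ card_le B A.

Definition setR : R -> Prop := fun _ => True.

Definition strong_measure_zero (X : R -> Prop) : Prop :=
  forall eps : nat -> R, (forall i, 0 < eps i) ->
    exists x : nat -> R, forall y, X y ->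
      exists i, x i - eps i < y /\ y < x i + eps i.

Definition Unif_S : Prop :=
  forall X : R -> Prop, card_lt X setR -> strong_measure_zero X.

Definition dominating (H : (nat -> nat) -> Prop) : Prop :=
  forall g : nat -> nat, exists h, H h /\ forall n, (g n < h n)%nat.

(* d = c: since d <= c always holds, d = c means every dominating family
   has cardinality at least c. *)
Definition d_eq_c : Prop :=
  forall H : (nat -> nat) -> Prop, dominating H -> card_le setR H.

(* Main.v *)
Require Import Defs.
From Stdlib Require Import Reals.
From Stdlib Require Import Lra Lia FunctionalExtensionality List Arith Cantor ClassicalEpsilon Classical.
From Coquelicot Require Import Coquelicot.
From mathcomp Require ssreflect ssrfun ssrbool eqtype ssrnat seq boolp wochoice.

Module WO.
Import ssreflect ssrfun ssrbool eqtype ssrnat seq boolp wochoice.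

Lemma wo_exists_mc : exists lt : (nat->nat) -> (nat->nat) -> Prop,
  well_founded lt /\ (forall a b, a = b \/ lt a b \/ lt b a).
Proof.
have [R wR] := well_ordering_principle (nat -> nat).
have refl : forall x, R x x.
  move=> x; have ne : nonempty [pred w | w == x] by exists x; rewrite inE.
  have [w [[win wmin] _]] := wR _ ne.
  by move: win (wmin x); rewrite !inE => /eqP-> /(_ (eqxx _)).
have anti : forall y z, R y z -> R z y -> y = z.
  move=> y z Ryz Rzy.
  have ne2 : nonempty [pred w | (w == y) || (w == z)] by exists y; rewrite inE eqxx.
  have [w [_ wuniq]] := wR _ ne2.
  have hy : minimum_of R [pred w | (w == y) || (w == z)] y.
    by split; [rewrite inE eqxx | move=> v; rewrite inE => /orP[/eqP->|/eqP->]].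
  have hz : minimum_of R [pred w | (w == y) || (w == z)] z.
    by split; [rewrite inE eqxx orbT | move=> v; rewrite inE => /orP[/eqP->|/eqP->]].
  by rewrite -(wuniq _ hy) -(wuniq _ hz).
exists (fun a b => R a b /\ a <> b); split.
- move=> x; apply: contrapT => nAx.
  have ne : nonempty [pred y | ~~ `[< Acc (fun a b => R a b /\ a <> b) y >]].
    by exists x; rewrite inE; apply/negP => /asboolP.
  have [z [[zin zmin] _]] := wR _ ne.
  move: zin; rewrite inE => /negP; apply; apply/asboolP.
  constructor => y [Ryz nyz].
  apply: contrapT => nAy.
  have yin : y \in [pred y | ~~ `[< Acc (fun a b => R a b /\ a <> b) y >]].
    by rewrite inE; apply/negP => /asboolP.
  exact: nyz (anti _ _ Ryz (zmin y yin)).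
- move=> a b; have [->|nab] := eqVneq a b; first by left.
  right.
  have ne2 : nonempty [pred w | (w == a) || (w == b)] by exists a; rewrite inE eqxx.
  have [w [[win wmin] _]] := wR _ ne2.
  move: win wmin; rewrite inE => /orP[/eqP->|/eqP->] wmin.
  + left; split; [by apply: wmin; rewrite inE eqxx orbT | exact/eqP].
  + right; split; [by apply: wmin; rewrite inE eqxx | by apply/eqP; rewrite eq_sym].
Qed.
End WO.

Open Scope R_scope.


Fixpoint Sx (g : nat -> nat) (n : nat) : nat :=
  match n with 0 => S (g 0%nat) | S m => S (Sx g m + g (S m)) end.
Definition term (g : nat -> nat) (n : nat) : R := (/3) ^ (Sx g n).
Definition code (g : nat -> nat) : R := Series (term g).
Fixpoint psum (g : nat -> nat) (n : nat) : R :=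
  match n with 0 => 0 | S m => psum g m + term g m end.

Lemma p3_pos : forall n, 0 < (/3) ^ n.
Proof. intro n; apply pow_lt; lra. Qed.

Lemma p3_S : forall n, (/3) ^ (S n) = /3 * (/3)^n.
Proof. intro n; reflexivity. Qed.

Lemma p3_anti : forall a b, (b <= a)%nat -> (/3)^a <= (/3)^b.
Proof.
  intros a b H; induction H; [lra|].
  rewrite p3_S; pose proof (p3_pos m); lra.
Qed.

Lemma Sx_ge : forall g n, (g n + n + 1 <= Sx g n)%nat.
Proof. intros g n; induction n; simpl; lia. Qed.

Lemma Sx_S : forall g n, (S (Sx g n) <= Sx g (S n))%nat.
Proof. intros; simpl; lia. Qed.

Lemma term_pos : forall g n, 0 < term g n.
Proof. intros; apply p3_pos. Qed.

Lemma term_le : forall g n, term g n <= (/3)^n.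
Proof. intros; unfold term; apply p3_anti; pose proof (Sx_ge g n); lia. Qed.

Lemma term_shift : forall g n k, term g (n + k) <= term g n * (/3)^k.
Proof.
  intros g n k; induction k.
  - rewrite Nat.add_0_r; simpl; lra.
  - replace (n + S k)%nat with (S (n + k)) by lia.
    unfold term in *. 
    apply Rle_trans with ((/3)^(S (Sx g (n+k)))).
    + apply p3_anti; apply Sx_S.
    + rewrite p3_S. rewrite p3_S.
      pose proof (p3_pos (Sx g (n+k))).
      assert (0 < /3) by lra. nra.
Qed.

Lemma geom3 : Rabs (/3) < 1.
Proof. rewrite Rabs_pos_eq; lra. Qed.

Lemma ex_series_shift : forall g n, ex_series (fun k => term g (n + k)).
Proof.
  intros g n. apply (@ex_series_le R_AbsRing R_CompleteNormedModule _ (fun k => (/3)^k)).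
  - intro k. change (norm (term g (n+k))) with (Rabs (term g (n+k))).
    rewrite Rabs_pos_eq by (left; apply term_pos).
    apply Rle_trans with (term g n * (/3)^k); [apply term_shift|].
    pose proof (term_le g 0). pose proof (p3_pos k). pose proof (term_pos g n).
    assert (term g n <= 1).
    { apply Rle_trans with ((/3)^n); [apply term_le|]. destruct n; [simpl; lra|].
      apply Rle_trans with ((/3)^0); [apply p3_anti; lia| simpl; lra]. }
    nra.
  - apply ex_series_geom, geom3.
Qed.

Lemma ex_series_term : forall g, ex_series (term g).
Proof. intro g. apply (ex_series_ext (fun k => term g (0 + k))); [reflexivity|]. apply ex_series_shift. Qed.

Lemma Series_nonneg : forall a, (forall n, 0 <= a n) -> ex_series a -> 0 <= Series a.
Proof.
  intros a Ha Hex.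
  assert (E : Series (fun n => 0 * a n) = 0) by (rewrite Series_scal_l; ring).
  rewrite <- E. apply Series_le; auto. intro n; split; [lra| rewrite Rmult_0_l; auto].
Qed.

Lemma tail_lo : forall g n, term g n <= Series (fun k => term g (n + k)).
Proof.
  intros g n. rewrite Series_incr_1 by apply ex_series_shift.
  rewrite Nat.add_0_r.
  assert (0 <= Series (fun k => term g (n + S k))).
  { apply Series_nonneg. intro; left; apply term_pos.
    apply (ex_series_ext (fun k => term g (S n + k))). intro; f_equal; lia. apply ex_series_shift. }
  lra.
Qed.

Lemma tail_hi : forall g n, Series (fun k => term g (n + k)) <= term g n * (3/2).
Proof.
  intros g n.
  apply Rle_trans with (Series (fun k => term g n * (/3)^k)).
  - apply Series_le. intro k; split; [left; apply term_pos| apply term_shift].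
    apply (ex_series_ext (fun k => (/3)^k * term g n)); [intro; simpl; ring|].
    apply ex_series_scal_r, ex_series_geom, geom3.
  - rewrite Series_scal_l, Series_geom by apply geom3. right; field.
Qed.

Lemma code_split : forall g n, code g = psum g n + Series (fun k => term g (n + k)).
Proof.
  intros g n; induction n.
  - simpl. unfold code. rewrite Rplus_0_l. apply Series_ext. reflexivity.
  - rewrite IHn. simpl. rewrite Series_incr_1 by apply ex_series_shift.
    rewrite Nat.add_0_r. rewrite Rplus_assoc. f_equal. f_equal.
    apply Series_ext. intro k. f_equal. lia.
Qed.

Lemma Sx_prefix : forall g g' m, (forall i, (i <= m)%nat -> g i = g' i) -> Sx g m = Sx g' m.
Proof.
  intros g g' m; induction m; intro H; simpl.
  - rewrite (H 0%nat); auto.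
  - rewrite IHm by (intros; apply H; lia). rewrite (H (S m)); auto.
Qed.

Lemma psum_prefix : forall g g' n, (forall i, (i < n)%nat -> g i = g' i) -> psum g n = psum g' n.
Proof.
  intros g g' n; induction n; intro H; simpl; auto.
  rewrite IHn by (intros; apply H; lia). unfold term.
  rewrite (Sx_prefix g g' n) by (intros; apply H; lia). auto.
Qed.

Lemma Sx_lt : forall g g' n, (forall i, (i < n)%nat -> g i = g' i) -> (g n < g' n)%nat ->
  (Sx g n < Sx g' n)%nat.
Proof.
  intros g g' n H Hlt; destruct n; simpl; [lia|].
  rewrite (Sx_prefix g g' n) by (intros; apply H; lia). lia.
Qed.

Lemma code_lt_aux : forall g g' n, (forall i, (i < n)%nat -> g i = g' i) -> (g n < g' n)%nat ->
  code g' < code g.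
Proof.
  intros g g' n H Hlt.
  rewrite (code_split g n), (code_split g' n).
  rewrite (psum_prefix g g' n H).
  pose proof (tail_lo g n). pose proof (tail_hi g' n).
  pose proof (Sx_lt g g' n H Hlt).
  assert (term g' n <= /3 * term g n).
  { unfold term. rewrite <- p3_S. apply p3_anti. lia. }
  pose proof (term_pos g n). lra.
Qed.

Lemma code_inj : forall g g', code g = code g' -> g = g'.
Proof.
  intros g g' E.
  assert (forall n, g n = g' n).
  { intro n. induction n as [n IH] using (well_founded_induction Wf_nat.lt_wf).
    destruct (Nat.lt_trichotomy (g n) (g' n)) as [Hl|[He|Hl]]; auto.
    - pose proof (code_lt_aux g g' n IH Hl). lra.
    - pose proof (code_lt_aux g' g n (fun i Hi => eq_sym (IH i Hi)) Hl). lra. }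
  extensionality n; auto.
Qed.

Lemma code_close : forall g n k, (k <= g n)%nat ->
  0 <= code g - psum g n <= /2 * (/3)^k.
Proof.
  intros g n k Hk. rewrite (code_split g n).
  pose proof (tail_lo g n). pose proof (tail_hi g n). pose proof (term_pos g n).
  assert (term g n <= /3 * (/3)^k).
  { unfold term. rewrite <- p3_S. apply p3_anti. pose proof (Sx_ge g n). lia. }
  lra.
Qed.

Fixpoint pfx (g : nat -> nat) (n : nat) : nat :=
  match n with 0 => 0%nat | S m => S (Cantor.to_nat (g m, pfx g m)) end.

Lemma pre_inj : forall n g g' n', pfx g n = pfx g' n' -> n = n' /\ forall i, (i < n)%nat -> g i = g' i.
Proof.
  induction n; intros g g' n' E; destruct n'; cbn [pfx] in E; try discriminate.
  - split; [auto| intros; lia].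
  - assert (E1 : Cantor.to_nat (g n, pfx g n) = Cantor.to_nat (g' n', pfx g' n')) by (apply Nat.succ_inj; exact E).
    assert (E2 := f_equal Cantor.of_nat E1). rewrite !Cantor.cancel_of_to in E2.
    injection E2 as E3 E4.
    destruct (IHn g g' n' E4) as [-> Hp]. split; auto.
    intros i Hi. destruct (Nat.eq_dec i n'); [subst; auto| apply Hp; lia].
Qed.

Fixpoint Ltree (k : nat -> nat) (n : nat) : list nat :=
  match n with
  | 0 => 0%nat :: nil
  | S m => flat_map (fun c => map (fun v => S (Cantor.to_nat (v, c))) (seq 0 (k c))) (Ltree k m)
  end.
Definition fK (k : nat -> nat) (n : nat) : nat := list_max (map k (Ltree k n)).

Lemma tree_in : forall k h n, (forall i, (i < n)%nat -> (h i < k (pfx h i))%nat) -> In (pfx h n) (Ltree k n).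
Proof.
  intros k h n; induction n; intro H; simpl; [auto|].
  apply in_flat_map. exists (pfx h n). split; [apply IHn; intros; apply H; lia|].
  apply in_map_iff. exists (h n). split; auto. apply in_seq. specialize (H n). lia.
Qed.

Lemma fK_ge : forall k n c, In c (Ltree k n) -> (k c <= fK k n)%nat.
Proof.
  intros k n c Hc. unfold fK.
  assert (HF := proj1 (list_max_le (map k (Ltree k n)) _) (le_n _)).
  rewrite Forall_forall in HF. apply HF. apply in_map; auto.
Qed.

Lemma escape : forall k h, (exists n, (fK k n <= h n)%nat) -> exists n, (k (pfx h n) <= h n)%nat.
Proof.
  intros k h [n Hn]. apply NNPP. intro Hno.
  assert (Hall : forall i, (h i < k (pfx h i))%nat).
  { intro i. destruct (le_lt_dec (k (pfx h i)) (h i)); auto. exfalso; apply Hno; eauto. }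
  pose proof (fK_ge k n _ (tree_in k h n (fun i _ => Hall i))). specialize (Hall n). lia.
Qed.

Definition cen (j : nat) : R :=
  match excluded_middle_informative (exists p : (nat -> nat) * nat, pfx (fst p) (snd p) = j) with
  | left H => let p := proj1_sig (constructive_indefinite_description _ H) in psum (fst p) (snd p)
  | right _ => 0
  end.

Lemma cen_pre : forall g n, cen (pfx g n) = psum g n.
Proof.
  intros g n. unfold cen.
  destruct excluded_middle_informative as [H|H].
  - destruct (constructive_indefinite_description _ H) as [[g0 n0] E]; simpl in *.
    destruct (pre_inj _ _ _ _ E) as [-> Hp]. apply psum_prefix; auto.
  - exfalso; apply H; exists (g, n); auto.
Qed.


Lemma card_image {T U : Type} (Q : T -> Prop) (F : T -> U) :
  card_le setR (fun u => exists t, Q t /\ u = F t) -> card_le setR Q.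
Proof.
  intros [f [Hf Hinj]].
  exists (fun r => proj1_sig (constructive_indefinite_description _ (Hf r I))).
  split.
  - intros r _. exact (proj1 (proj2_sig (constructive_indefinite_description _ (Hf r I)))).
  - intros r r' Hr Hr' E.
    pose proof (proj2 (proj2_sig (constructive_indefinite_description _ (Hf r I)))) as Et.
    pose proof (proj2 (proj2_sig (constructive_indefinite_description _ (Hf r' I)))) as Et'.
    apply Hinj; [exact I|exact I|]. rewrite Et, Et', E. reflexivity.
Qed.

Lemma card_mono {T : Type} (Q Q' : T -> Prop) :
  (forall x, Q x -> Q' x) -> card_le setR Q -> card_le setR Q'.
Proof. intros H [f [Hf Hinj]]. exists f; split; auto. Qed.

Lemma wf_min {T : Type} (lt : T -> T -> Prop) (Pt : T -> Prop) :
  well_founded lt -> (exists t, Pt t) -> exists t, Pt t /\ forall u, lt u t -> ~ Pt u.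
Proof.
  intros Hwf [t0 H0]. apply NNPP; intro Hno.
  assert (forall t, ~ Pt t).
  { intro t. induction t as [t IH] using (well_founded_ind Hwf).
    intro Ht. apply Hno. exists t; split; auto. }
  eapply H; eauto.
Qed.

Definition P := (nat -> nat).

Lemma index_struct : d_eq_c -> exists (lt : P -> P -> Prop) (D : P -> Prop) (iota : R -> P) (rho : P -> P),
  well_founded lt /\ (forall a b, a = b \/ lt a b \/ lt b a) /\
  (forall r, D (iota r)) /\ (forall r r', iota r = iota r' -> r = r') /\
  (forall p, D (rho p)) /\ (forall p p', rho p = rho p' -> p = p') /\
  (forall a, D a -> ~ card_le setR (fun b => D b /\ lt b a)).
Proof.
  intro Hd.
  destruct WO.wo_exists_mc as [lt [Hwf Htot]].
  exists lt.
  destruct (classic (exists t, card_le setR (fun b => lt b t))) as [Hex|Hnex].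
  - destruct (wf_min lt _ Hwf Hex) as [t [[f [Hf Hinj]] Hmin]].
    exists (fun b => lt b t), f, (fun p => f (code p)).
    split; [exact Hwf|]. split; [exact Htot|]. split.
    + intro r; apply Hf; exact I.
    + split. { intros r r'; apply Hinj; exact I. } split.
    { intros p; apply Hf; exact I. } split.
    { intros p p' E. apply code_inj. apply Hinj; [exact I|exact I|exact E]. }
    { intros a Ha Hc. apply (Hmin a Ha). eapply card_mono; [|exact Hc]. intros x [_ Hx]; exact Hx. }
  - assert (Hall : card_le setR (fun _ : P => True)).
    { apply Hd. intro g. exists (fun n => S (g n)). split; auto. }
    destruct Hall as [f [_ Hinj]].
    exists (fun _ => True), f, (fun p => p).
    split; [exact Hwf|]. split; [exact Htot|]. split; [intro; exact I|]. split.
    { intros r r'; apply Hinj; exact I. } split; [intro; exact I|]. split; [intros p p' E; exact E|].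
    { intros a _ Hc. apply Hnex. exists a. eapply card_mono; [|exact Hc]. intros x [_ Hx]; exact Hx. }
Qed.

Definition param (rho : P -> P) (a : P) : P :=
  match excluded_middle_informative (exists p, rho p = a) with
  | left H => proj1_sig (constructive_indefinite_description _ H)
  | right _ => fun _ => 0%nat
  end.

Lemma param_rho : forall rho p, (forall p p', rho p = rho p' -> p = p') -> param rho (rho p) = p.
Proof.
  intros rho p Hi. unfold param. destruct excluded_middle_informative as [H|H].
  - apply Hi. exact (proj2_sig (constructive_indefinite_description _ H)).
  - exfalso; apply H; eauto.
Qed.

Definition Phi (rho : P -> P) (a : P) (Ga : P) : P := fun n => Nat.max (fK (param rho a) n) (S (Ga n)).

Definition step (lt : P -> P -> Prop) (D : P -> Prop) (rho : P -> P) (a : P) (f : forall b, lt b a -> P) : P :=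
  match excluded_middle_informative
     (exists g : P, forall b (H : lt b a), D b -> exists n, (Phi rho b (f b H) n <= g n)%nat) with
  | left H => proj1_sig (constructive_indefinite_description _ H)
  | right _ => fun _ => 0%nat
  end.

Definition Gf (lt : P -> P -> Prop) (Hwf : well_founded lt) (D : P -> Prop) (rho : P -> P) : P -> P :=
  Fix Hwf (fun _ => P) (step lt D rho).

Lemma Gf_eq : forall lt Hwf D rho a, Gf lt Hwf D rho a = step lt D rho a (fun b _ => Gf lt Hwf D rho b).
Proof.
  intros. unfold Gf. apply (Fix_eq Hwf (fun _ => P) (step lt D rho)).
  intros x f g Hfg. assert (f = g).
  { extensionality y. extensionality p. apply Hfg. }
  subst; reflexivity.
Qed.

Lemma Gf_spec : forall lt Hwf D rho, d_eq_c ->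
  (forall a, D a -> ~ card_le setR (fun b => D b /\ lt b a)) ->
  forall a, D a -> forall b, lt b a -> D b ->
  exists n, (Phi rho b (Gf lt Hwf D rho b) n <= Gf lt Hwf D rho a n)%nat.
Proof.
  intros lt Hwf D rho Hd Hsmall a Da.
  rewrite Gf_eq. unfold step. destruct excluded_middle_informative as [H|H].
  - intros b Hb Db. exact (proj2_sig (constructive_indefinite_description _ H) b Hb Db).
  - exfalso. apply H. apply NNPP; intro Hno.
    apply (Hsmall a Da).
    apply (card_image (fun b => D b /\ lt b a) (fun b => Phi rho b (Gf lt Hwf D rho b))).
    apply Hd. intro g. apply NNPP; intro Hng. apply Hno. exists g.
    intros b Hb Db. apply NNPP; intro Hnn. apply Hng.
    exists (Phi rho b (Gf lt Hwf D rho b)). split.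
    + exists b; split; auto.
    + intro n. destruct (le_lt_dec (Phi rho b (Gf lt Hwf D rho b) n) (g n)) as [Hle|Hlt]; auto.
      exfalso; apply Hnn; eauto.
Qed.

Lemma idx_odd : forall i, Nat.even (2 * (S i) + 1) = false /\ Nat.eqb (2 * (S i) + 1) 1 = false /\
  (Nat.div2 (2 * (S i) + 1) - 1 = i)%nat.
Proof.
  intro i. split; [apply Nat.even_odd|]. split; [apply Nat.eqb_neq; lia|].
  rewrite Nat.div2_odd'. lia.
Qed.

Lemma idx_even : forall j, Nat.even (2 * j) = true /\ Nat.div2 (2 * j) = j.
Proof. intro j. split; [apply Nat.even_even| apply Nat.div2_double]. Qed.

Theorem theorem0p11 :
  Unif_S -> d_eq_c ->
  exists X : R -> Prop, strong_measure_zero X /\ card_eq X setR.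
Proof.
  intros HU Hd.
  destruct (index_struct Hd) as [lt [D [iota [rho [Hwf [Htot [HDi [Hii [HDr [Hri Hsmall]]]]]]]]]].
  set (G := Gf lt Hwf D rho).
  assert (Hsp : forall a, D a -> forall b, lt b a -> D b -> exists n, (Phi rho b (G b) n <= G a n)%nat).
  { intros a Da b Hb Db. exact (Gf_spec lt Hwf D rho Hd Hsmall a Da b Hb Db). }
  assert (Gdist : forall a b, D a -> D b -> lt a b -> G a <> G b).
  { intros a b Da Db Hab E. destruct (Hsp b Db a Hab Da) as [n Hn].
    unfold Phi in Hn. rewrite E in Hn. lia. }
  assert (Cinj : forall a b, D a -> D b -> code (G a) = code (G b) -> a = b).
  { intros a b Da Db E. apply code_inj in E.
    destruct (Htot a b) as [Hab|[Hab|Hab]]; auto.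
    - exfalso; exact (Gdist a b Da Db Hab E).
    - exfalso; exact (Gdist b a Db Da Hab (eq_sym E)). }
  set (X := fun x => exists r, x = code (G (iota r))).
  exists X. split.
  - intros eps Heps.
    assert (Hk : forall j, exists m, (/3)^m < eps (2 * j)%nat).
    { intro j. destruct (pow_lt_1_zero (/3) geom3 (eps (2*j)%nat) (Heps _)) as [N HN].
      exists N. specialize (HN N (le_n _)). rewrite Rabs_pos_eq in HN; [exact HN|].
      left; apply p3_pos. }
    set (keps := fun j => proj1_sig (constructive_indefinite_description _ (Hk j))).
    assert (Hkeps : forall j, (/3)^(keps j) < eps (2*j)%nat).
    { intro j. exact (proj2_sig (constructive_indefinite_description _ (Hk j))). }
    set (b := rho keps).
    assert (Db : D b) by apply HDr.
    assert (Hpb : param rho b = keps) by (apply param_rho; exact Hri).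
    set (Hh := fun x => exists a, (D a /\ lt a b) /\ x = code (G a)).
    assert (Hcard : card_lt Hh setR).
    { split.
      - exists (fun x => x). split; [intros; exact I| intros x y _ _ E; exact E].
      - intro Hc. apply (Hsmall b Db).
        apply (card_image (fun a => D a /\ lt a b) (fun a => code (G a))). exact Hc. }
    destruct (HU Hh Hcard (fun n => eps (2 * (S n) + 1)%nat) (fun n => Heps _)) as [z Hz].
    exists (fun i => if Nat.even i then cen (Nat.div2 i)
                     else if Nat.eqb i 1 then code (G b) else z (Nat.div2 i - 1)%nat).
    intros y [r ->]. set (a := iota r).
    assert (Da : D a) by apply HDi.
    destruct (Htot a b) as [E|[Hab|Hba]].
    + exists 1%nat. simpl. rewrite E. pose proof (Heps 1%nat). lra.
    + destruct (Hz (code (G a))) as [i Hi].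
      { exists a; split; auto. }
      exists (2 * (S i) + 1)%nat. destruct (idx_odd i) as [E1 [E2 E3]].
      rewrite E1, E2, E3. exact Hi.
    + destruct (Hsp a Da b Hba Db) as [n Hn].
      assert (Hn' : exists n, (fK keps n <= G a n)%nat).
      { exists n. unfold Phi in Hn. rewrite Hpb in Hn. lia. }
      destruct (escape keps (G a) Hn') as [n' Hn''].
      exists (2 * pfx (G a) n')%nat. destruct (idx_even (pfx (G a) n')) as [E1 E2].
      rewrite E1, E2, cen_pre.
      pose proof (code_close (G a) n' _ Hn''). pose proof (Hkeps (pfx (G a) n')).
      pose proof (p3_pos (keps (pfx (G a) n'))). lra.
  - set (f := fun x => match excluded_middle_informative (exists r, x = code (G (iota r))) with
                       | left H => proj1_sig (constructive_indefinite_description _ H)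
                       | right _ => 0 end).
    assert (fspec : forall x, X x -> x = code (G (iota (f x)))).
    { intros x Hx. unfold f. destruct excluded_middle_informative as [H|H].
      - exact (proj2_sig (constructive_indefinite_description _ H)).
      - contradiction. }
    exists f. split; [intros; exact I|]. split.
    + intros x y Hx Hy E. rewrite (fspec x Hx), (fspec y Hy), E. reflexivity.
    + intros y _. exists (code (G (iota y))).
      assert (Hx : X (code (G (iota y)))) by (exists y; reflexivity).
      split; [exact Hx|].
      pose proof (fspec _ Hx) as E. apply Cinj in E; [|apply HDi|apply HDi].
      apply Hii in E. symmetry; exact E.
Qed.
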